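(* Let $\Lambda$ be a lattice, $\phi$ a positive semidefinite quadratic form on $\Lambda\otimes\mathbb{R}$, and $P$ a perfect Delaunay polyhedron in $\mathrm{Del}(\Lambda,\phi)$. Let $\Gamma$ be a sublattice of $\Lambda$ and let $D,D'$ be Delaunay polytopes (of the affine lattices $\Lambda\cap\operatorname{aff}D$, $\Lambda\cap\operatorname{aff}D'$ with respect to the restrictions of $\phi$) such that $\operatorname{vert}P=\operatorname{vert}D\oplus\Gamma=\operatorname{vert}D'\oplus\Gamma$. If $\operatorname{aff}D$ is parallel to $\operatorname{aff}D'$, then $D'=D+\mathbf{u}$ for some $\mathbf{u}\in\Gamma$.
   Context: For a lattice $L$ and positive semidefinite form $\phi$, a Delaunay polyhedron of $\mathrm{Del}(L,\phi)$ is $\operatorname{conv}\mathcal{V}(f)$, where $f$ is a real quadratic polynomial with quadratic part $\phi$, $f\ge0$ on $L$, and $\mathcal{V}(f)=\{\mathbf{z}\in L: f(\mathbf{z})=0\}\ne\emptyset$; its ''vertex set'' $\operatorname{vert}$ means the set $\mathcal{V}(f)$ of lattice points on it (even when the polyhedron is unbounded). It is perfect if $f$ can be chosen so that every real polynomial of degree at most $2$ vanishing on $\mathcal{V}(f)$ is a scalar multiple of $f$. A Delaunay polytope is a bounded Delaunay polyhedron. The notation $\operatorname{vert}P=\operatorname{vert}D\oplus\Gamma$ means that $\operatorname{vert}P=\{\mathbf{v}+\mathbf{u}:\mathbf{v}\in\operatorname{vert}D,\ \mathbf{u}\in\Gamma\}$ and each element of $\operatorname{vert}P$ has a unique such representation.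 *)

(* Defs.v *)
From mathcomp Require Import all_boot all_order all_algebra.
From mathcomp Require Import boolp classical_sets reals.
Set Implicit Arguments. Unset Strict Implicit. Unset Printing Implicit Defensive.
Import Order.TTheory GRing.Theory Num.Theory.
Local Open Scope ring_scope.
Local Open Scope classical_set_scope.

(* The lattice Lambda is identified with Z^n inside R^n = Lambda (x) R
   (via a choice of basis); points are row vectors 'rV[R]_n. *)
Definition lattice_pt (R : realType) (n : nat) (x : 'rV[R]_n) : Prop :=
  forall j, x 0 j \is a Num.int.

Definition qform (R : realType) (n : nat) (A : 'M[R]_n) (x : 'rV[R]_n) : R :=
  (x *m A *m x^T) 0 0.

Definition psd_form (R : realType) (n : nat) (A : 'M[R]_n) : Prop :=
  forall x, 0 <= qform A x.

Definition quad_fn (R : realType) (n : nat) (A : 'M[R]_n) (b : 'rV[R]_n) (c : R)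
  (x : 'rV[R]_n) : R := qform A x + (b *m x^T) 0 0 + c.

Definition zero_set (R : realType) (n : nat) (A : 'M[R]_n) (b : 'rV[R]_n) (c : R)
  : set 'rV[R]_n := [set x | lattice_pt x /\ quad_fn A b c x = 0].

Definition convex_hull (R : realType) (n : nat) (S : set 'rV[R]_n) : set 'rV[R]_n :=
  [set x | exists (k : nat) (s : 'I_k -> 'rV[R]_n) (l : 'I_k -> R),
     (forall i, S (s i)) /\ (forall i, 0 <= l i) /\ \sum_(i < k) l i = 1 /\
     x = \sum_(i < k) l i *: s i].

Definition affine_hull (R : realType) (n : nat) (S : set 'rV[R]_n) : set 'rV[R]_n :=
  [set x | exists (k : nat) (s : 'I_k -> 'rV[R]_n) (l : 'I_k -> R),
     (forall i, S (s i)) /\ \sum_(i < k) l i = 1 /\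
     x = \sum_(i < k) l i *: s i].

(* V is the vertex set (set of lattice points) of a Delaunay polyhedron
   conv V(f) of Del(Z^n, phi), phi = qform A. *)
Definition delaunay_vset (R : realType) (n : nat) (A : 'M[R]_n) (V : set 'rV[R]_n)
  : Prop :=
  exists b c, (forall x, lattice_pt x -> 0 <= quad_fn A b c x) /\
    V = zero_set A b c /\ V !=set0.

Definition perfect_delaunay_vset (R : realType) (n : nat) (A : 'M[R]_n)
  (V : set 'rV[R]_n) : Prop :=
  exists b c, (forall x, lattice_pt x -> 0 <= quad_fn A b c x) /\
    V = zero_set A b c /\ V !=set0 /\
    (forall (Q : 'M[R]_n) (b' : 'rV[R]_n) (c' : R),
       (forall x, V x -> quad_fn Q b' c' x = 0) ->
       exists t : R, forall x, quad_fn Q b' c' x = t * quad_fn A b c x).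

(* V is the vertex set of a Delaunay polytope D = conv V of the affine lattice
   Z^n cap aff D, with respect to the restriction of phi to aff D.  A quadratic
   polynomial on aff D with quadratic part phi|aff D is the restriction of a
   quadratic polynomial on R^n with quadratic part phi. Bounded = polytope. *)
Definition delaunay_polytope_vset (R : realType) (n : nat) (A : 'M[R]_n)
  (V : set 'rV[R]_n) : Prop :=
  let H := affine_hull (convex_hull V) in
  exists b c,
    (forall x, lattice_pt x -> H x -> 0 <= quad_fn A b c x) /\
    V = [set x | lattice_pt x /\ H x /\ quad_fn A b c x = 0] /\
    V !=set0 /\
    (exists M : R, forall x, convex_hull V x -> forall j, `|x 0 j| <= M).

Definition sublattice (R : realType) (n : nat) (G : set 'rV[R]_n) : Prop :=
  G 0 /\ (forall x, G x -> lattice_pt x) /\ (forall x y, G x -> G y -> G (x - y)).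

Definition direct_sum (R : realType) (n : nat) (VP VD G : set 'rV[R]_n) : Prop :=
  (forall x, VP x <-> exists v u, VD v /\ G u /\ x = v + u) /\
  (forall v u v' u', VD v -> G u -> VD v' -> G u' -> v + u = v' + u' ->
     v = v' /\ u = u').

Definition parallel (R : realType) (n : nat) (H H' : set 'rV[R]_n) : Prop :=
  exists t, forall x, H' x <-> H (x - t).

(* Main.v *)
Require Import Defs.
From mathcomp Require Import all_boot all_order all_algebra.
From mathcomp Require Import boolp classical_sets reals.
From mathcomp Require Import ring lra.
Import Order.TTheory GRing.Theory Num.Theory.
Local Open Scope ring_scope.
Local Open Scope classical_set_scope.

Section S.
Variables (R : realType) (n : nat).
Implicit Types (S : set 'rV[R]_n).

Lemma lin_sum (d : 'rV[R]_n) k (l : 'I_k -> R) (s : 'I_k -> 'rV[R]_n) :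
  (d *m (\sum_(i < k) l i *: s i)^T) 0 0 = \sum_(i < k) l i * (d *m (s i)^T) 0 0.
Proof.
rewrite !mxE.
under eq_bigr do rewrite !mxE summxE.
under [RHS]eq_bigr do rewrite !mxE big_distrr.
rewrite exchange_big /=; apply: eq_bigr => j _; rewrite big_distrr; apply: eq_bigr => i _.
by rewrite !mxE mulrCA.
Qed.

Lemma aff_zero S (d : 'rV[R]_n) e :
  (forall x, S x -> (d *m x^T) 0 0 + e = 0) ->
  forall x, affine_hull S x -> (d *m x^T) 0 0 + e = 0.
Proof.
move=> H x [k [s [l [Hs [Hl ->]]]]].
rewrite lin_sum.
have -> : e = \sum_(i < k) l i * e.
  by rewrite -big_distrl /= Hl mul1r.
rewrite -big_split /=; apply: big1 => i _.
by rewrite -mulrDr H // mulr0.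
Qed.

Lemma conv_aff S x : convex_hull S x -> affine_hull S x.
Proof. by move=> [k [s [l [Hs [_ [Hl ->]]]]]]; exists k, s, l. Qed.

Lemma sub_aff S x : S x -> affine_hull (convex_hull S) x.
Proof.
move=> Sx.
have Cx : convex_hull S x.
  exists 1%N, (fun=> x), (fun=> 1).
  by split; [|split; [|split]] => //; rewrite big_ord1 ?scale1r.
exists 1%N, (fun=> x), (fun=> 1).
by split; [|split] => //; rewrite big_ord1 ?scale1r.
Qed.

Lemma aff_comb2 S x y a : affine_hull S x -> affine_hull S y ->
  affine_hull S (a *: x + (1 - a) *: y).
Proof.
move=> [k1 [s1 [l1 [Hs1 [Hl1 ->]]]]] [k2 [s2 [l2 [Hs2 [Hl2 ->]]]]].
exists (k1 + k2)%N.
exists (fun i => match split i with inl j => s1 j | inr j => s2 j end).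
exists (fun i => match split i with inl j => a * l1 j | inr j => (1 - a) * l2 j end).
split; first by move=> i; case: (split i).
rewrite !big_split_ord /=.
have L (j : 'I_k1) : split (lshift k2 j) = inl j :> 'I_k1 + 'I_k2 by rewrite -[lshift _ _]/(unsplit (inl j)) unsplitK.
have Rr (j : 'I_k2) : split (rshift k1 j) = inr j :> 'I_k1 + 'I_k2 by rewrite -[rshift _ _]/(unsplit (inr j)) unsplitK.
split.
  rewrite (eq_bigr (fun j => a * l1 j)); try by move=> j _; rewrite L.
  rewrite [X in _ + X](eq_bigr (fun j => (1 - a) * l2 j)); try by move=> j _; rewrite Rr.
  by rewrite -!big_distrr /= Hl1 Hl2 !mulr1 subrKC.
symmetry; rewrite (eq_bigr (fun j => (a * l1 j) *: s1 j)); try by move=> j _; rewrite L.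
rewrite [X in _ + X](eq_bigr (fun j => ((1 - a) * l2 j) *: s2 j)); try by move=> j _; rewrite Rr.
rewrite !scaler_sumr; congr (_ + _); apply: eq_bigr => i _; by rewrite scalerA.
Qed.

Lemma aff_3 S x y z : affine_hull S x -> affine_hull S y -> affine_hull S z ->
  affine_hull S (x + y - z).
Proof.
move=> Hx Hy Hz.
have Hm := @aff_comb2 S x y (2^-1) Hx Hy.
have := @aff_comb2 S _ z 2 Hm Hz.
have h2 : (2 : R) * 2^-1 = 1 by rewrite mulfV // pnatr_eq0.
have h3 : (1 : R) - 2^-1 = 2^-1.
  by field.
rewrite h3 !scalerDr !scalerA h2 !scale1r.
have -> : (1 - 2 : R) = -1 by ring.
by rewrite scaleN1r.
Qed.


Lemma quad_diff (A : 'M[R]_n) b c b' c' y :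
  quad_fn A b c y - quad_fn A b' c' y = ((b - b') *m y^T) 0 0 + (c - c').
Proof. rewrite /quad_fn mulmxBl [in RHS]mxE [X in _ = _ + X + _]mxE. set p := qform _ _. set q1 := (b *m _) 0 0. set q2 := (b' *m _) 0 0. ring. Qed.

Lemma in_VD (A : 'M[R]_n) (VP VD G : set 'rV[R]_n) :
  sublattice G -> perfect_delaunay_vset A VP -> delaunay_polytope_vset A VD ->
  direct_sum VP VD G ->
  forall x, VP x -> affine_hull (convex_hull VD) x -> VD x.
Proof.
move=> [G0 _] [bP [cP [_ [EP _]]]] [bD [cD [_ [ED _]]]] [DS1 _] x VPx Hx.
have sub v : VD v -> VP v by move=> Hv; apply/DS1; exists v, 0; rewrite addr0.
have Z : forall y, VD y -> ((bP - bD) *m y^T) 0 0 + (cP - cD) = 0.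
  move=> y Hy; rewrite -(quad_diff A).
  have := sub _ Hy; rewrite EP => -[_ ->].
  by move: Hy; rewrite {1}ED => -[_ [_ ->]]; rewrite subr0.
have Z1 : forall y, convex_hull VD y -> ((bP - bD) *m y^T) 0 0 + (cP - cD) = 0.
  by move=> y Cy; exact: (@aff_zero VD _ _ Z y (@conv_aff VD y Cy)).
have Z2 := @aff_zero _ _ _ Z1 x Hx.
move: (VPx); rewrite EP => -[Lx Fx].
rewrite ED; split => //; split => //.
by move: Z2; rewrite -(quad_diff A) Fx sub0r => /eqP; rewrite oppr_eq0 => /eqP.
Qed.

Lemma conv_trans (S : set 'rV[R]_n) u :
  convex_hull [set x + u | x in S] = [set x + u | x in convex_hull S].
Proof.
apply/seteqP; split => x.
- move=> [k [s [l [Hs [Hl0 [Hl ->]]]]]].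
  exists (\sum_(i < k) l i *: (s i - u)).
    exists k, (fun i => s i - u), l; do ![split => //].
    by move=> i; case: (Hs i) => y Sy <-; rewrite addrK.
  under eq_bigr do rewrite scalerBr.
  by rewrite sumrB -scaler_suml Hl scale1r subrK.
- move=> [y [k [s [l [Hs [Hl0 [Hl ->]]]]]] <-].
  exists k, (fun i => s i + u), l; do ![split => //].
    by move=> i; exists (s i).
symmetry;   under eq_bigr do rewrite scalerDr.
  by rewrite big_split /= -scaler_suml Hl scale1r.
Qed.

End S.

Theorem lemma1 (R : realType) (n : nat) (A : 'M[R]_n)
  (VP VD VD' G : set 'rV[R]_n) :
  psd_form A ->
  perfect_delaunay_vset A VP ->
  sublattice G ->
  delaunay_polytope_vset A VD ->
  delaunay_polytope_vset A VD' ->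
  direct_sum VP VD G ->
  direct_sum VP VD' G ->
  parallel (affine_hull (convex_hull VD)) (affine_hull (convex_hull VD')) ->
  exists u, G u /\ convex_hull VD' = [set x + u | x in convex_hull VD].
Proof.
move=> _ HP HG HD HD' DS DS' [t Ht].
have inD := @in_VD _ _ A VP VD G HG HP HD DS.
have inD' := @in_VD _ _ A VP VD' G HG HP HD' DS'.
have [G0 [_ GB]] := HG.
have [_ [_ [_ [_ [[v' Dv'] _]]]]] := HD'.
have VPv' : VP v' by apply/DS'.1; exists v', 0; rewrite addr0.
have [v [u [Dv [Gu Ev']]]] := (DS.1 v').1 VPv'.
exists u; split => //.
rewrite -conv_trans; congr convex_hull.
set H := affine_hull (convex_hull VD).
have Hv : H v by apply: sub_aff.
have Hv't : H (v' - t) by apply/Ht; apply: sub_aff.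
apply/seteqP; split => x.
- move=> Dx; exists (x - u); last by rewrite subrK.
  apply: inD.
    apply/DS'.1; exists x, (- u); split => //; split; last by [].
    by rewrite -sub0r; apply: GB.
  have -> : x - u = (x - t) + v - (v' - t) by rewrite Ev'; apply/matrixP => i j; rewrite !mxE; ring.
  apply: aff_3 => //; by apply/Ht; apply: sub_aff.
- move=> [y Dy <-]; apply: inD'.
    by apply/DS.1; exists y, u.
  apply/Ht.
  have -> : y + u - t = y + (v' - t) - v by rewrite Ev'; apply/matrixP => i j; rewrite !mxE; ring.
  by apply: aff_3 => //; apply: sub_aff.
Qed.
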